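(* Let $v_1,\ldots,v_n$ ($n\ge2$) be an MA-ordering of a capacitated hypergraph $H$, and let $\beta=\min_{1<i\le n}d(V_{i-1},v_i)$. Then $\beta\le\lambda(H)\le n\beta$.
   Context: A hypergraph $H=(V,E)$ has finite vertex set $V$, a finite multiset $E$ of edges (subsets of $V$) and capacities $c:E\to\mathbb{R}_{\ge0}$. $c(S)$ is the total capacity of edges meeting both $S$ and $V\setminus S$, and $\lambda(H)=\min_{\emptyset\ne S\subsetneq V}c(S)$. For subsets $A_1,\ldots,A_k$, $d(A_1,\ldots,A_k)$ is the total capacity of edges meeting every $A_i$ (a vertex $v$ stands for $\{v\}$). $V_i=\{v_1,\ldots,v_i\}$; the ordering is an MA-ordering if $d(V_{i-1},v_i)\ge d(V_{i-1},v_j)$ for all $1\le i<j\le n$. *)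

(* Defs.v *)
From HB Require Import structures.
From mathcomp Require Import all_boot all_order all_algebra.
Set Implicit Arguments. Unset Strict Implicit. Unset Printing Implicit Defensive.
Import Order.TTheory GRing.Theory Num.Theory.
Local Open Scope ring_scope.

(* A capacitated hypergraph: vertex set the finType V, edges indexed by the
   finType E (so that the edge multiset may contain repetitions), the edge
   map ed : E -> {set V}, capacities c : E -> R (assumed nonnegative in the
   theorem). *)

Definition meets (V : finType) (X A : {set V}) : bool := X :&: A != set0.

Definition total_cap (R : realFieldType) (E : finType) (c : E -> R) : R :=
  \sum_(f : E) c f.

Definition cutval (R : realFieldType) (V E : finType) (ed : E -> {set V})
  (c : E -> R) (S : {set V}) : R :=
  \sum_(f : E | meets (ed f) S && meets (ed f) (~: S)) c f.

Definition dcap (R : realFieldType) (V E : finType) (ed : E -> {set V})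
  (c : E -> R) (A B : {set V}) : R :=
  \sum_(f : E | meets (ed f) A && meets (ed f) B) c f.

(* The fold starts at the
   total capacity, an upper bound of every cut value (capacities being
   nonnegative), so this is exactly the minimum whenever |V| >= 2. *)
Definition lambdaH (R : realFieldType) (V E : finType) (ed : E -> {set V})
  (c : E -> R) : R :=
  \big[Num.min/total_cap c]_(S : {set V} | (S != set0) && (S != setT))
     cutval ed c S.

(* V_i = {v_1, ..., v_i}; with a 0-indexed ordering v : 'I_n -> V,
   prefix v i = {v 0, ..., v (i-1)} (i elements). *)
Definition prefix (V : finType) (n : nat) (v : 'I_n -> V) (i : nat) : {set V} :=
  [set v j | j : 'I_n & (j < i)%N].

Definition MA_ordering (R : realFieldType) (V E : finType) (ed : E -> {set V})
  (c : E -> R) (n : nat) (v : 'I_n -> V) : Prop :=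
  forall i j : 'I_n, (i < j)%N ->
    dcap ed c (prefix v i) [set v j] <= dcap ed c (prefix v i) [set v i].

(* beta = min_{1 < i <= n} d(V_{i-1}, v_i); 0-indexed: i ranges over
   1 <= i < n.  The fold starts at the total capacity (an upper bound). *)
Definition betaMA (R : realFieldType) (V E : finType) (ed : E -> {set V})
  (c : E -> R) (n : nat) (v : 'I_n -> V) : R :=
  \big[Num.min/total_cap c]_(i : 'I_n | (0 < i)%N)
     dcap ed c (prefix v i) [set v i].

(* Main.v *)
Require Import Defs.
From HB Require Import structures.
From mathcomp Require Import all_boot all_order all_algebra.
Import Order.TTheory GRing.Theory Num.Theory.
Local Open Scope ring_scope.

Section Aux.
Variables (R : realFieldType) (V E : finType) (ed : E -> {set V}) (c : E -> R).
Hypothesis c_ge0 : forall f, 0 <= c f.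

Lemma mem_prefix n (v : 'I_n -> V) (vinj : injective v) i j :
  (v j \in Defs.prefix v i) = (j < i)%N.
Proof.
apply/imsetP/idP => [[k]|hj]; first by rewrite inE => hk /vinj ->.
by exists j; rewrite ?inE.
Qed.

Lemma sum_sub (P Q : pred E) : (forall f, P f -> Q f) ->
  \sum_(f | P f) c f <= \sum_(f | Q f) c f.
Proof.
move=> PQ; rewrite [X in X <= _]big_mkcond [X in _ <= X]big_mkcond /=.
apply: ler_sum => f _; case: ifP => Pf; first by rewrite PQ.
by case: ifP.
Qed.

Lemma dcap_ge0 A B : 0 <= dcap ed c A B.
Proof. by apply: sumr_ge0. Qed.

Lemma total_ge0 : 0 <= total_cap c.
Proof. by apply: sumr_ge0. Qed.

End Aux.

Theorem mainTheorem20 (R : realFieldType) (V E : finType)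
  (ed : E -> {set V}) (c : E -> R) (c_ge0 : forall f, 0 <= c f)
  (n : nat) (v : 'I_n -> V) (v_bij : bijective v) (n_ge2 : (2 <= n)%N)
  (hMA : MA_ordering ed c v) :
  betaMA ed c v <= lambdaH ed c /\ lambdaH ed c <= n%:R * betaMA ed c v.
Proof.
have vinj : injective v by apply: bij_inj.
have [w vw wv] := v_bij.
have n0 : (0 < n)%N by apply: leq_trans n_ge2.
pose o0 : 'I_n := Ordinal n0.
split.
  apply: le_bigmin; first by apply: bigmin_le_id.
  move=> S /andP[S0 ST].
  have [x xS] : exists x, x \in S by apply/set0Pn.
  have [y yS] : exists y, y \notin S.
    by apply/existsP; move: ST; apply: contraR; rewrite negb_exists => /forallP H;
       apply/eqP/setP => z; rewrite inE; have := H z; rewrite negbK.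
  pose b := v o0 \in S.
  pose P := fun j : 'I_n => (v j \in S) != b.
  have Pex : exists j, P j.
    rewrite /P /b; case: (v o0 \in S).
      by exists (w y); rewrite wv (negbTE yS).
    by exists (w x); rewrite wv xS.
  have [j0 Pj0] := Pex.
  case: (arg_minnP (fun j : 'I_n => nat_of_ord j) Pj0) => i Pi imin.
  have i0 : (0 < i)%N.
    rewrite lt0n; apply/negP => /eqP ie.
    have : i = o0 by apply: val_inj.
    by move=> ei; move: Pi; rewrite /P ei /b eqxx.
  apply: (bigmin_inf i _ _ _ i0).
  apply: sum_sub => // f /andP[m1 m2].
  have side : forall z, z \in Defs.prefix v i -> (z \in S) = b.
    move=> z /imsetP[k]; rewrite inE => hk ->.
    apply/eqP; move: hk; apply: contraTT => Pk.
    by rewrite -leqNgt; exact: imin k Pk.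
  have vi : (v i \in S) = ~~ b by move: Pi; rewrite /P; move: (v i \in S) (b) => p q; case: p; case: q.
  move: m1 m2; rewrite /meets.
  case/set0Pn => z; rewrite inE => /andP[zf zp].
  case/set0Pn => u; rewrite inE => /andP[uf]; rewrite inE => /eqP eu; rewrite eu in uf.
  have zs := side z zp.
  case bb: b zs vi => zs vi.
    apply/andP; split; apply/set0Pn.
      by exists z; rewrite inE zf zs.
    by exists (v i); rewrite !inE uf vi.
  apply/andP; split; apply/set0Pn.
    by exists (v i); rewrite !inE uf vi.
  by exists z; rewrite !inE zf zs.
have lamtot : lambdaH ed c <= total_cap c by apply: bigmin_le_id.
rewrite /betaMA; elim/big_ind: _.
- apply: (le_trans lamtot); rewrite -[X in X <= _]mul1r ler_wpM2r ?total_ge0 //.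
  by rewrite ler1n.
- move=> a b' ha hb; rewrite minEle; by case: ifP.
move=> i i0.
pose Pi := Defs.prefix v i.
have Pi0 : Pi != set0.
  by apply/set0Pn; exists (v o0); rewrite /Pi mem_prefix.
have PiT : Pi != setT.
  apply/negP => /eqP PT; have : v i \in Pi by rewrite PT inE.
  by rewrite /Pi mem_prefix // ltnn.
apply: (bigmin_inf Pi); first by rewrite Pi0 PiT.
apply: (@le_trans _ _ (\sum_(j : 'I_n | (i <= j)%N) dcap ed c Pi [set v j])).
  rewrite /cutval /dcap (exchange_big_dep xpredT) //=.
  rewrite [X in X <= _]big_mkcond /=; apply: ler_sum => f _.
  case: ifP => [/andP[m1 m2]|_]; last first.
    by apply: sumr_ge0.
  case/set0Pn: m2 => z; rewrite inE => /andP[zf]; rewrite inE => zn.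
  have ij : (i <= w z)%N by rewrite leqNgt -(@mem_prefix _ _ _ vinj i) wv.
  rewrite (bigD1 (w z)) /=; last first.
    rewrite ij wv m1 /meets; apply/set0Pn; exists z; by rewrite !inE zf eqxx.
  by rewrite lerDl; apply: sumr_ge0.
apply: (@le_trans _ _ (\sum_(j : 'I_n | (i <= j)%N) dcap ed c Pi [set v i])).
  apply: ler_sum => j; rewrite leq_eqVlt => /orP[/eqP ij|ij].
    by have -> : i = j by apply: val_inj.
  exact: hMA.
apply: (@le_trans _ _ (\sum_(j : 'I_n) dcap ed c Pi [set v i])); last first.
  by rewrite sumr_const card_ord mulr_natl.
rewrite [X in _ <= X](bigID (fun j : 'I_n => (i <= j)%N)) /= lerDl.
by apply: sumr_ge0 => j _; apply: dcap_ge0.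
Qed.
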